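(* Fix an integer $k\ge1$ and let $\Delta_k:=\log(1/2)/\log(1-2^{-k})$. Fix $\Delta>0$, and for $n\ge k$ let $m=\lfloor\Delta n\rfloor$ and $V=(V_1,\dots,V_m)\sim\mathbf{P}_{\text{unif}}$. As $n\to\infty$: (i) if $\Delta<\Delta_k$, then $\mathbf{P}_{\text{unif}}(V\in\mathsf{FLAT})\to 1$; (ii) if $\Delta>\Delta_k$, then $\mathbf{P}_{\text{unif}}(V\in\mathsf{FLAT})\to 0$.
   Context: A $k$-flat of $\mathbb{F}_2^n$ is an affine subspace of dimension $n-k$; equivalently a set $\{x\in\mathbb{F}_2^n : \ell_i(x)=\varepsilon_i \ \forall i\in[k]\}$ where $\ell_1,\dots,\ell_k$ are linearly independent linear forms on $\mathbb{F}_2^n$ and $\varepsilon_1,\dots,\varepsilon_k\in\mathbb{F}_2$. Let $q_0$ be the uniform distribution on the set of all $k$-flats of $\mathbb{F}_2^n$, and $\mathbf{P}_{\text{unif}}:=q_0^{\otimes m}$ (i.e. $V_1,\dots,V_m$ i.i.d. uniform $k$-flats). For $V=(V_1,\dots,V_m)$, let $\mathcal{S}(V)=\mathbb{F}_2^n\setminus\bigcup_{j=1}^m V_j$ and $Z(V)=|\mathcal{S}(V)|$. $V$ is flat satisfiable, written $V\in\mathsf{FLAT}$, if $Z(V)\ge1$, i.e. $\bigcup_j V_j\neq\mathbb{F}_2^n$. *)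

(* Defs.v *)
From HB Require Import structures.
From mathcomp Require Import all_boot all_order all_algebra.
Set Implicit Arguments. Unset Strict Implicit. Unset Printing Implicit Defensive.
Import GRing.Theory.
Local Open Scope ring_scope.

Definition F2vec (n : nat) := 'rV['F_2]_n.

(* A k-flat of F_2^n: {x | l_i(x) = e_i for all i < k}, where the l_i are the
   rows of a k x n matrix A with linearly independent rows (row_free A). *)
Definition is_flat (n k : nat) (S : {set F2vec n}) : bool :=
  [exists A : 'M['F_2]_(k, n), exists e : 'cV['F_2]_k,
     row_free A && (S == [set x : F2vec n | A *m x^T == e])].

Definition flats (n k : nat) : {set {set F2vec n}} := [set S | is_flat k S].

Definition flat_sat (n m : nat) (V : {ffun 'I_m -> {set F2vec n}}) : bool :=
  (\bigcup_(j < m) V j) != [set: F2vec n].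

Definition num_flat_sat (n k m : nat) : nat :=
  #|[set V : {ffun 'I_m -> {set F2vec n}} |
       [forall j, V j \in flats n k] && flat_sat V]|.

Definition num_flat_tuples (n k m : nat) : nat := (#|flats n k| ^ m)%N.

From Stdlib Require Import Reals.
Local Open Scope R_scope.

(* P_unif(V in FLAT) with V_1..V_m i.i.d. uniform k-flats of F_2^n. *)
Definition P_FLAT (n k m : nat) : R :=
  INR (num_flat_sat n k m) / INR (num_flat_tuples n k m).

Definition Delta_k (k : nat) : R := ln (1 / 2) / ln (1 - / 2 ^ k).

Definition m_of (Delta : R) (n : nat) : nat := Z.to_nat (Int_part (Delta * INR n)).

(* Main.v *)
Require Import Defs.
From HB Require Import structures.
From mathcomp Require all_boot all_order all_algebra zify.
From Stdlib Require Import Reals Lra Lia ZArith.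

Module Aux.
Import HB.structures.
Import mathcomp.boot.all_boot mathcomp.order.all_order mathcomp.algebra.all_algebra mathcomp.zify.zify.
Set Implicit Arguments. Unset Strict Implicit. Unset Printing Implicit Defensive.
Import GRing.Theory.
Local Open Scope ring_scope.

Definition sol n k (A : 'M['F_2]_(k, n)) (e : 'cV['F_2]_k) : {set F2vec n} :=
  [set x : F2vec n | A *m x^T == e].

Lemma card_F2vec n : #|{: F2vec n}| = (2 ^ n)%N.
Proof. by rewrite card_mx card_Fp // mul1n. Qed.

Lemma card_cvk k : #|{: 'cV['F_2]_k}| = (2 ^ k)%N.
Proof. by rewrite card_mx card_Fp // muln1. Qed.

Lemma sol_nonempty n k (A : 'M['F_2]_(k, n)) e : row_free A ->
  exists x : F2vec n, A *m x^T = e.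
Proof.
move=> rf; exists (e^T *m pinvmx A^T).
apply: trmx_inj; rewrite trmx_mul trmxK mulmxKpV //.
apply: submx_full; by rewrite /row_full mxrank_tr.
Qed.

Lemma card_sol n k (A : 'M['F_2]_(k, n)) e : row_free A ->
  (#|sol A e| * 2 ^ k)%N = (2 ^ n)%N.
Proof.
move=> rf.
have eqc : forall e', #|sol A e'| = #|sol A 0|.
  move=> e'; have [x0 hx0] := sol_nonempty e' rf.
  have -> : sol A e' = [set x0 + y | y in sol A 0].
    apply/setP=> y; rewrite !inE; apply/idP/imsetP.
      move/eqP=> hy; exists (y - x0); last by rewrite addrC subrK.
      by rewrite inE raddfD mulmxDr hy raddfN mulmxN hx0 subrr.
    move=> [z]; rewrite inE => /eqP hz ->.
    by rewrite raddfD mulmxDr hz hx0 addr0.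
  by rewrite card_imset //; exact: addrI.
have h1 : (2 ^ n)%N = (\sum_(e' : 'cV['F_2]_k) #|sol A e'|)%N.
  rewrite -card_F2vec -sum1_card (partition_big (fun x : F2vec n => A *m x^T) predT) //=.
  apply: eq_bigr => e' _; rewrite -sum1_card; apply: eq_bigl => x.
  by rewrite inE.
rewrite h1 (eq_bigr (fun _ => #|sol A 0|)); last by move=> e' _; exact: eqc.
rewrite sum_nat_const.
by rewrite eqc mulnC -(card_cvk k).

Qed.

Definition aff n (M : 'M['F_2]_n) (b : F2vec n) (x : F2vec n) : F2vec n := x *m M + b.
Definition affi n (M : 'M['F_2]_n) (b : F2vec n) (y : F2vec n) : F2vec n := (y - b) *m invmx M.

Lemma aff_K n (M : 'M['F_2]_n) b : M \in unitmx -> cancel (aff M b) (affi M b).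
Proof. by move=> hM x; rewrite /aff /affi addrK mulmxK. Qed.
Lemma affi_K n (M : 'M['F_2]_n) b : M \in unitmx -> cancel (affi M b) (aff M b).
Proof. by move=> hM y; rewrite /aff /affi mulmxKV // subrK. Qed.

Lemma flatsP n k (S : {set F2vec n}) :
  reflect (exists A : 'M['F_2]_(k, n), exists e, row_free A /\ S = sol A e) (S \in flats n k).
Proof.
rewrite /flats inE /is_flat; apply: (iffP existsP).
  by move=> [A /existsP [e /andP [rf /eqP ->]]]; exists A, e.
by move=> [A [e [rf ->]]]; exists A; apply/existsP; exists e; rewrite rf eqxx.
Qed.

Lemma aff_flat n k (M : 'M['F_2]_n) b (S : {set F2vec n}) : M \in unitmx ->
  S \in flats n k -> aff M b @: S \in flats n k.
Proof.
move=> hM /flatsP [A [e [rf ->]]]; apply/flatsP.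
set A' := A *m (invmx M)^T.
exists A', (e + A' *m b^T); split.
  rewrite /row_free /A' mxrankMfree //.
  by rewrite row_free_unit unitmx_tr unitmx_inv.
rewrite (can2_imset_pre _ (aff_K b hM) (affi_K b hM)).
apply/setP => y; rewrite !inE /affi trmx_mul mulmxA raddfB /= mulmxBr -/A'.
by rewrite subr_eq.
Qed.

Lemma flats_nonempty n k : (k <= n)%N -> (0 < #|flats n k|)%N.
Proof.
move=> kn; apply/card_gt0P; exists (sol (pid_mx k : 'M['F_2]_(k, n)) 0).
apply/flatsP; exists (pid_mx k), 0; split => //.
by rewrite /row_free rank_pid_mx.
Qed.

Definition u2 n k (x y : F2vec n) :=
  #|[set S in flats n k | (x \notin S) && (y \notin S)]|.

Lemma aff_inj n (M : 'M['F_2]_n) b : M \in unitmx -> injective (aff M b).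
Proof. by move=> hM; apply: can_inj (aff_K b hM). Qed.

Lemma u2_aff_le n k (M : 'M['F_2]_n) b x y : M \in unitmx ->
  (u2 k x y <= u2 k (aff M b x) (aff M b y))%N.
Proof.
move=> hM; rewrite /u2 -(card_imset _ (imset_inj (@aff_inj _ _ b hM))).
apply: subset_leq_card; apply/subsetP => T /imsetP [S].
rewrite !inE => /andP [hS /andP [hx hy]] ->.
rewrite !mem_imset ?hx ?hy ?andbT; try exact: (@aff_inj _ _ b hM).
by have := @aff_flat n k M b S hM; rewrite !inE; apply.
Qed.

Lemma u2_aff n k (M : 'M['F_2]_n) b x y : M \in unitmx ->
  u2 k (aff M b x) (aff M b y) = u2 k x y.
Proof.
move=> hM; apply/eqP; rewrite eqn_leq u2_aff_le // andbT.
have hM' : invmx M \in unitmx by rewrite unitmx_inv.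
have e : forall z, aff (invmx M) (- (b *m invmx M)) (aff M b z) = z.
  by move=> z; rewrite /aff mulmxDl mulmxK // addrK.
by rewrite -{2}(e x) -{2}(e y); apply: u2_aff_le.
Qed.

Lemma u2_trans n k (x y : F2vec n) : x != y ->
  u2 k x y = u2 k 0 (pid_mx 1 : F2vec n).
Proof.
move=> xy.
have h1 : u2 k x y = u2 k 0 (y - x).
  rewrite -(@u2_aff n k 1%:M x 0 (y - x) (unitmx1 _ _)).
  by rewrite /aff !mulmx1 add0r subrK.
rewrite h1; set v := y - x.
have vn0 : v != 0 by rewrite subr_eq0 eq_sym.
have := mulmx_ebase v; rewrite rank_rV vn0 /=.
rewrite [col_ebase v]mx11_scalar mul_scalar_mx -scalemxAl => hv.
have cu : col_ebase v 0 0 \is a GRing.unit.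
  by have := col_ebase_unit v; rewrite unitmxE det_mx11.
set M' := col_ebase v 0 0 *: row_ebase v.
have hM' : M' \in unitmx by rewrite unitmxZ // row_ebase_unit.
rewrite -(@u2_aff n k M' 0 0 (pid_mx 1) hM').
by rewrite /aff mul0mx addr0 addr0 /M' -scalemxAr hv.
Qed.

Lemma card_flat n k (S : {set F2vec n}) : S \in flats n k -> (#|S| * 2 ^ k)%N = (2 ^ n)%N.
Proof. by move=> /flatsP [A [e [rf ->]]]; exact: card_sol. Qed.

Lemma card_sumb (T : finType) (A : {pred T}) : #|A| = (\sum_x (x \in A : nat))%N.
Proof.
rewrite -sum1_card big_mkcond /=; apply: eq_bigr => x _; by case: (x \in A).
Qed.

Lemma u2_sum n k x y : u2 k x y =
  (\sum_(S in flats n k) ((x \notin S) : nat) * ((y \notin S) : nat))%N.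
Proof.
rewrite /u2 card_sumb [RHS]big_mkcond /=; apply: eq_bigr => S _; rewrite inE.
by case: (S \in flats n k); case: (x \in S); case: (y \in S).
Qed.

Lemma sum_compl n (S : {set F2vec n}) : (\sum_x ((x \notin S) : nat))%N = #|~: S|.
Proof. by rewrite card_sumb; apply: eq_bigr => x _; rewrite inE. Qed.

Lemma sum_u2_diag n k : (\sum_(x : F2vec n) u2 k x x = \sum_(S in flats n k) #|~: S|)%N.
Proof.
rewrite (eq_bigr (fun x => \sum_(S in flats n k) ((x \notin S) : nat))%N); last first.
  by move=> x _; rewrite u2_sum; apply: eq_bigr => S _; case: (x \in S).
rewrite exchange_big /=; apply: eq_bigr => S _; exact: sum_compl.
Qed.

Lemma sum_u2 n k : (\sum_(x : F2vec n) \sum_(y : F2vec n) u2 k x y = \sum_(S in flats n k) #|~: S| ^ 2)%N.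
Proof.
rewrite (eq_bigr (fun x => \sum_(S in flats n k) \sum_y ((x \notin S) : nat) * ((y \notin S) : nat))%N); last first.
  by move=> x _; rewrite (eq_bigr _ (fun y _ => u2_sum k x y)) exchange_big.
rewrite exchange_big /=; apply: eq_bigr => S _.
rewrite (eq_bigr (fun i => (i \notin S) * #|~: S|)%N); last by move=> i _; rewrite -sum_compl big_distrr.
by rewrite -big_distrl /= sum_compl.
Qed.

Lemma u2_diag n k (x : F2vec n) : u2 k x x = u2 k (0 : F2vec n) 0.
Proof.
by rewrite -(@u2_aff n k 1%:M x 0 0 (unitmx1 _ _)) /aff mulmx1 add0r.
Qed.

Lemma second_moment (I : finType) (A : {pred I}) (f : I -> nat) :
  ((\sum_(i in A) f i) ^ 2 <= (\sum_(i in A) (0 < f i : nat)) * \sum_(i in A) f i ^ 2)%N.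
Proof.
set s1 := (\sum_(i in A) f i)%N; set s2 := (\sum_(i in A) f i ^ 2)%N.
set c := (\sum_(i in A) (0 < f i : nat))%N.
have pt : forall i, (2 * s1 * s2 * f i <= s2 ^ 2 * (0 < f i) + s1 ^ 2 * f i ^ 2)%N.
  move=> i; case: (posnP (f i)) => [->|fp]; first by rewrite muln0.
  rewrite muln1.
  have agm : forall x y, (2 * x * y <= x ^ 2 + y ^ 2)%N.
    move=> x y; case: (leqP y x) => h.
      have [d ->] : exists d, x = (y + d)%N by exists (x - y)%N; lia.
      rewrite sqrnD; nia.
    have [d ->] : exists d, y = (x + d)%N by exists (y - x)%N; lia.
    rewrite sqrnD; nia.
  have := agm s2 (s1 * f i)%N; rewrite expnMn; nia.
have hs : (2 * s1 * s2 * s1 <= s2 ^ 2 * c + s1 ^ 2 * s2)%N.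
  have e1 : (2*s1*s2*s1 = \sum_(i in A) 2*s1*s2*f i)%N by rewrite -big_distrr.
  have e2 : (s2^2*c + s1^2*s2 = \sum_(i in A) (s2^2*(0<f i) + s1^2*f i^2))%N.
    by rewrite big_split /= -!big_distrr.
  by rewrite e1 e2; apply: leq_sum => i _; exact: pt.
case: (posnP s2) => [s20|s2p].
  have f0 : forall i, i \in A -> f i = 0%N.
    move=> i iA; have : (f i ^ 2 <= s2)%N by rewrite /s2 (bigD1 i) //= leq_addr.
    rewrite s20; nia.
  by rewrite /s1 big1 //; exact: f0.
nia.
Qed.

Section Tuples.
Variables (n k m : nat).
Local Notation T := (F2vec n).
Local Notation tup := {ffun 'I_m -> {set T}}.

Lemma card_tup (B : {set {set T}}) :
  #|[set V : tup | [forall j, V j \in B]]| = (#|B| ^ m)%N.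
Proof.
rewrite -[in RHS](card_ord m) -card_ffun_on; apply: eq_card => V.
rewrite inE; apply/forallP/ffun_onP => h j; exact: h.
Qed.

Definition Tup := [set V : tup | [forall j, V j \in flats n k]].
Definition Zc (V : tup) := #|~: \bigcup_(j < m) V j|.

Lemma notin_cup (V : tup) x : (x \in ~: \bigcup_(j < m) V j) = [forall j, x \notin V j].
Proof.
rewrite in_setC; apply/idP/forallP => [H j | H].
  by apply/negP => hj; move/negP: H; apply; apply/bigcupP; exists j.
by apply/negP => /bigcupP [j _ hj]; move: (H j); rewrite hj.
Qed.

Lemma sum_pair x y :
  (\sum_(V in Tup) ((x \in ~: \bigcup_(j < m) V j) : nat) * ((y \in ~: \bigcup_(j < m) V j) : nat)
   = u2 k x y ^ m)%N.
Proof.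
rewrite /u2 -card_tup card_sumb [LHS]big_mkcond /=.
apply: eq_bigr => V _; rewrite /Tup !notin_cup !inE.
have -> : [forall j, V j \in [set S in flats n k | (x \notin S) && (y \notin S)]] =
  [&& [forall j, V j \in flats n k], [forall j, x \notin V j] & [forall j, y \notin V j]].
  apply/forallP/and3P => [h|[/forallP h1 /forallP h2 /forallP h3] j].
    by split; apply/forallP => j; move: (h j); rewrite inE => /and3P [].
  by rewrite inE h1 h2 h3.
by case: [forall j, V j \in flats n k]; case: [forall j, x \notin V j]; case: [forall j, y \notin V j].
Qed.

Lemma S1_eq : (\sum_(V in Tup) Zc V = \sum_(x : T) u2 k x x ^ m)%N.
Proof.
rewrite (eq_bigr _ (fun x _ => esym (sum_pair x x))) exchange_big /=.
apply: eq_bigr => V _; rewrite /Zc card_sumb; apply: eq_bigr => x _.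
by case: (x \in _).
Qed.

Lemma S2_eq : (\sum_(V in Tup) Zc V ^ 2 = \sum_(x : T) \sum_(y : T) u2 k x y ^ m)%N.
Proof.
rewrite (eq_bigr (fun x => \sum_(V in Tup) \sum_(y : T) ((x \in ~: \bigcup_(j < m) V j) : nat) * ((y \in ~: \bigcup_(j < m) V j) : nat))%N); last first.
  by move=> x _; rewrite -(eq_bigr _ (fun y _ => sum_pair x y)) exchange_big.
rewrite exchange_big /=; apply: eq_bigr => V _.
by rewrite /Zc card_sumb expnS expn1 big_distrl /=; apply: eq_bigr => x _; rewrite big_distrr.
Qed.

Lemma sat_eq : num_flat_sat n k m = (\sum_(V in Tup) (0 < Zc V : nat))%N.
Proof.
rewrite /num_flat_sat card_sumb [RHS]big_mkcond /=; apply: eq_bigr => V _.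
rewrite /Tup !inE /flat_sat /Zc card_gt0.
case: [forall j, V j \in flats n k] => //=.
by rewrite -setCT (inj_eq (@setC_inj _)).
Qed.

End Tuples.

Section Counts.
Variables (n k : nat).
Local Notation T := (F2vec n).
Definition Nf := #|flats n k|.
Definition aa := u2 k (0 : T) 0.
Definition bb := u2 k (0 : T) (pid_mx 1).

Lemma compl_card (S : {set T}) : S \in flats n k ->
  (#|~: S| * 2 ^ k = 2 ^ n * (2 ^ k - 1))%N.
Proof.
move=> hS; have h1 := card_flat hS; have h2 := cardsC S.
rewrite card_F2vec in h2; have h3 : (1 <= 2 ^ k)%N by rewrite expn_gt0.
nia.
Qed.

Lemma K1 : (2 ^ n * aa * 2 ^ k = Nf * (2 ^ n * (2 ^ k - 1)))%N.
Proof.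
have : (\sum_(x : T) u2 k x x = 2 ^ n * aa)%N.
  rewrite (eq_bigr _ (fun x _ => u2_diag k x)) sum_nat_const.
  by rewrite -(card_F2vec n).
rewrite sum_u2_diag => <-; rewrite big_distrl /= /Nf -sum_nat_const.
by apply: eq_bigr => S hS; rewrite compl_card.
Qed.

Lemma K2 : (2 ^ n * (aa + (2 ^ n - 1) * bb) * (2 ^ k) ^ 2
           = Nf * (2 ^ n * (2 ^ k - 1)) ^ 2)%N.
Proof.
have : (\sum_(x : T) \sum_(y : T) u2 k x y = 2 ^ n * (aa + (2 ^ n - 1) * bb))%N.
  rewrite (eq_bigr (fun _ => aa + (2 ^ n - 1) * bb)%N); last first.
    move=> x _; rewrite (bigD1 x) //= u2_diag; congr (_ + _)%N.
    rewrite (eq_bigr (fun _ => bb)); last by move=> y hy; rewrite /bb (@u2_trans n k x y) // eq_sym.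
    by rewrite sum_nat_const cardC1 card_F2vec subn1.
  by rewrite sum_nat_const -(card_F2vec n).
rewrite sum_u2 => <-; rewrite big_distrl /= /Nf -sum_nat_const.
by apply: eq_bigr => S hS; rewrite -expnMn compl_card.
Qed.

Lemma M1 m : (num_flat_sat n k m <= 2 ^ n * aa ^ m)%N.
Proof.
have -> : (2 ^ n * aa ^ m = \sum_(V in Tup n k m) Zc V)%N.
  rewrite S1_eq (eq_bigr _ (fun x _ => congr1 (expn^~ m) (u2_diag k x))).
  by rewrite sum_nat_const -(card_F2vec n).
rewrite sat_eq; apply: leq_sum => V _; by case: (Zc V).
Qed.

Lemma M2 m : ((2 ^ n * aa ^ m) ^ 2 <=
   num_flat_sat n k m * (2 ^ n * (aa ^ m + (2 ^ n - 1) * bb ^ m)))%N.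
Proof.
have -> : (2 ^ n * aa ^ m = \sum_(V in Tup n k m) Zc V)%N.
  rewrite S1_eq (eq_bigr _ (fun x _ => congr1 (expn^~ m) (u2_diag k x))).
  by rewrite sum_nat_const -(card_F2vec n).
have -> : (2 ^ n * (aa ^ m + (2 ^ n - 1) * bb ^ m) = \sum_(V in Tup n k m) Zc V ^ 2)%N.
  rewrite S2_eq (eq_bigr (fun _ => aa ^ m + (2 ^ n - 1) * bb ^ m)%N); last first.
    move=> x _; rewrite (bigD1 x) //= u2_diag; congr (_ + _)%N.
    rewrite (eq_bigr (fun _ => bb ^ m)%N); last by move=> y hy; rewrite /bb (@u2_trans n k x y) // eq_sym.
    by rewrite sum_nat_const cardC1 card_F2vec subn1.
  by rewrite sum_nat_const -(card_F2vec n).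
rewrite sat_eq; exact: second_moment.
Qed.

Lemma M3 m : (num_flat_sat n k m <= num_flat_tuples n k m)%N.
Proof.
rewrite /num_flat_tuples -card_tup; apply: subset_leq_card; apply/subsetP => V.
by rewrite !inE => /andP [].
Qed.

End Counts.
Import Stdlib.Reals.Reals.
Local Close Scope ring_scope.
Local Open Scope R_scope.
Lemma INRm (a b : nat) : INR (muln a b) = INR a * INR b. Proof. exact: mult_INR. Qed.
Lemma INRa (a b : nat) : INR (addn a b) = INR a + INR b. Proof. exact: plus_INR. Qed.
Lemma INRe (a b : nat) : INR (expn a b) = INR a ^ b.
Proof. rewrite -pow_INR. f_equal. elim: b => //= b IH. by rewrite expnS IH. Qed.
Lemma INRs (a b : nat) : (b <= a)%coq_nat -> INR (subn a b) = INR a - INR b.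
Proof. move=> h; rewrite -minus_INR //. Qed.
Lemma INRle (a b : nat) : leq a b -> INR a <= INR b.
Proof. move=> /leP; exact: le_INR. Qed.

Lemma real_bounds (n k m : nat) : (1 <= k)%coq_nat -> (k <= n)%coq_nat ->
  let e := 2 ^ n * (1 - / 2 ^ k) ^ m in
  P_FLAT n k m <= e /\ e / (1 + e) <= P_FLAT n k m /\
  0 <= P_FLAT n k m <= 1.
Proof.
move=> k1 kn e.
have Npos : leq 1 (Nf n k) by apply: flats_nonempty; apply/leP.
have h1 := K1 n k; have h2 := K2 n k; have h3 := M1 n k m; have h4 := M2 n k m.
have h5 := M3 n k m.
have p2k : leq 1 (expn 2 k) by rewrite expn_gt0.
have p2n : leq 1 (expn 2 n) by rewrite expn_gt0.
apply (f_equal INR) in h1; apply (f_equal INR) in h2.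
have le2k : (1 <= expn 2 k)%coq_nat by apply/leP.
have le2n : (1 <= expn 2 n)%coq_nat by apply/leP.
rewrite !INRm !INRe !INRs // in h1.
rewrite !INRm !INRa !INRm !INRe !INRs // in h2.
move/INRle: h3; move/INRle: h4; move/INRle: h5.
rewrite /num_flat_tuples !INRm !INRa !INRm !INRe !INRs // => h5 h4 h3.
have I2 : INR 2 = 2 by simpl; lra.
rewrite ?INRe ?I2 in h1 h2 h3 h4; rewrite (_ : INR 1 = 1) // in h1 h2 h4.
have Nr0 : 0 < INR (Nf n k) by apply: lt_0_INR; apply/leP.
rewrite /P_FLAT /num_flat_tuples INRe.
set s := INR (num_flat_sat n k m) in h3 h4 h5 *.
set Nr := INR (Nf n k) in h1 h2 h5 Nr0 *.
set A := INR (aa n k) in h1 h2 h3 h4.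
set B := INR (bb n k) in h1 h2 h3 h4.
have K1 : 1 <= 2 ^ k by apply: pow_R1_Rle; lra.
have X2 : 2 <= 2 ^ n.
  have := Rle_pow 2 1 n; rewrite pow_1; apply; [lra | lia].
set q := 1 - / 2 ^ k.
have Kq : 2 ^ k * q = 2 ^ k - 1 by rewrite /q; field; lra.
have Aq : A = Nr * q.
  apply: (Rmult_eq_reg_r (2 ^ n * 2 ^ k)); last by nra.
  transitivity (2 ^ n * A * 2 ^ k); first ring.
  rewrite h1 -Kq; ring.
have hq : / 2 <= q < 1.
  have ik : 0 < / 2 ^ k by apply: Rinv_0_lt_compat; lra.
  rewrite /q; split; last by lra.
  have : / 2 ^ k <= / 2; last lra.
  apply: Rinv_le_contravar; first lra.
  have := Rle_pow 2 1 k; rewrite pow_1; apply; [lra | lia].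
have B0 : 0 <= B by apply: pos_INR.
have s0 : 0 <= s by apply: pos_INR.
have Bq : B <= Nr * q ^ 2.
  set X := 2 ^ n in h1 h2 h3 h4 X2 *; set K := 2 ^ k in h1 h2 Kq K1.
  have e2 : A + (X - 1) * B = Nr * X * q ^ 2.
    apply: (Rmult_eq_reg_r (X * (K * K))); last by nra.
    transitivity (X * (A + (X - 1) * B) * (K * K)); first ring.
    rewrite h2 -Kq; ring.
  rewrite Aq in e2.
  have hh : 0 <= Nr * (q * (1 - q)) by apply: Rmult_le_pos; nra.
  have : (X - 1) * B <= (X - 1) * (Nr * q ^ 2) by nra.
  move/Rmult_le_reg_l; apply; lra.
rewrite Aq Rpow_mult_distr in h3 h4.
have Bm : B ^ m <= Nr ^ m * (q ^ m) ^ 2.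
  have -> : (q ^ m) ^ 2 = (q ^ 2) ^ m by rewrite -!pow_mult Nat.mul_comm.
  rewrite -Rpow_mult_distr; apply: pow_incr; split => //.
rewrite /e -/q.
have D0 : 0 < Nr ^ m by apply: pow_lt.
have Q0 : 0 < q ^ m by apply: pow_lt; lra.
set D := Nr ^ m in h3 h4 h5 Bm D0 *; set Q := q ^ m in h3 h4 Bm Q0 *.
set X := 2 ^ n in h3 h4 X2 *.
have h6 : X * Q * X * Q * D <= s * (X * Q + X * Q * (X * Q)).
  have h7 : X * D * Q * (X * D * Q) <= s * (X * (D * Q + X * (D * Q ^ 2))).
    apply: (Rle_trans _ (s * (X * (D * Q + (X - 1) * B ^ m)))).
      by apply: (Rle_trans _ _ _ _ (Rle_trans _ _ _ h4 _)); right; ring.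
    apply: Rmult_le_compat_l => //.
    apply: Rmult_le_compat_l; first lra.
    apply: Rplus_le_compat_l.
    apply: (Rle_trans _ ((X - 1) * (D * Q ^ 2))); first by apply: Rmult_le_compat_l; [lra|].
    have : 0 <= D * Q ^ 2 by nra.
    nra.
  apply: (Rmult_le_reg_r D) => //.
  apply: (Rle_trans _ _ _ _ (Rle_trans _ _ _ h7 _)); [right; ring | right; ring].
split; [|split].
- apply: (Rmult_le_reg_r D) => //; rewrite /Rdiv Rmult_assoc Rinv_l; nra.
- have e0 : 0 < X * Q by nra.
  apply: (Rmult_le_reg_r ((1 + X * Q) * D)); first nra.
  have -> : s / D * ((1 + X * Q) * D) = s * (1 + X * Q) by field; lra.
  have -> : X * Q / (1 + X * Q) * ((1 + X * Q) * D) = X * Q * D by field; lra.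
  apply: (Rmult_le_reg_r (X * Q)) => //.
  apply: (Rle_trans _ _ _ _ (Rle_trans _ _ _ h6 _)); [right; ring | right; ring].
- split.
    apply: Rmult_le_pos => //; apply: Rlt_le; exact: Rinv_0_lt_compat.
  apply: (Rmult_le_reg_r D) => //; rewrite /Rdiv Rmult_assoc Rinv_l; nra.
Qed.

End Aux.

From Corelib Require Import ssreflect.
Open Scope R_scope.


Lemma mof_bounds (Delta : R) (n : nat) : 0 < Delta ->
  INR (m_of Delta n) <= Delta * INR n /\ Delta * INR n - 1 < INR (m_of Delta n).
Proof.
intro Dp. unfold m_of.
have x0 : 0 <= Delta * INR n by apply: Rmult_le_pos; [lra | apply: pos_INR].
destruct (base_Int_part (Delta * INR n)) as [h1 h2].
have ip0 : (0 <= Int_part (Delta * INR n))%Z.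
  have : (-1 < Int_part (Delta * INR n))%Z by apply: lt_IZR; lra.
  lia.
rewrite INR_IZR_INZ Z2Nat.id //. lra.
Qed.

Lemma e_exp (n m : nat) (q : R) : 0 < q ->
  2 ^ n * q ^ m = exp (INR n * ln 2 + INR m * ln q).
Proof.
intro qp. rewrite exp_plus -ln_pow; last lra. rewrite -ln_pow; last lra.
rewrite !exp_ln //; apply: pow_lt; lra.
Qed.

Lemma exp_pow' (n : nat) (L : R) : exp (INR n * L) = exp L ^ n.
Proof.
induction n as [|n IH]; first by rewrite /= Rmult_0_l exp_0.
rewrite S_INR Rmult_plus_distr_r Rmult_1_l exp_plus IH /=; ring.
Qed.

Lemma exp_le (x y : R) : x <= y -> exp x <= exp y.
Proof. intro h. destruct h as [h|h]; [left; exact: exp_increasing | right; congruence]. Qed.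

Theorem mainTheorem3 (k : nat) (Delta : R) :
  (1 <= k)%nat -> 0 < Delta ->
  (Delta < Delta_k k ->
     Un_cv (fun n => P_FLAT n k (m_of Delta n)) 1) /\
  (Delta > Delta_k k ->
     Un_cv (fun n => P_FLAT n k (m_of Delta n)) 0).
Proof.
intros k1 Dp.
set q := 1 - / 2 ^ k.
have K1 : 2 <= 2 ^ k.
  have := Rle_pow 2 1 k; rewrite pow_1; apply; [lra | lia].
have hq : / 2 <= q < 1.
  have ik : 0 < / 2 ^ k by apply: Rinv_0_lt_compat; lra.
  unfold q; split; last by lra.
  have : / 2 ^ k <= / 2; last lra.
  apply: Rinv_le_contravar; lra.
have qp : 0 < q by lra.
have lq : ln q < 0 by rewrite -ln_1; apply: ln_increasing; lra.
have l2 : 0 < ln 2 by have := ln_lt_2; lra.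
have DK : Delta_k k = - ln 2 / ln q.
  unfold Delta_k; fold q. replace (1 / 2) with (/ 2) by field. rewrite ln_Rinv //; lra.
rewrite DK.
set L := ln 2 + Delta * ln q.
have lnbound : forall n, (k <= n)%nat ->
   INR n * L <= INR n * ln 2 + INR (m_of Delta n) * ln q /\
   INR n * ln 2 + INR (m_of Delta n) * ln q <= INR n * L - ln q.
  intros n kn. destruct (mof_bounds Delta n Dp) as [m1 m2]. unfold L.
  split; nra.
have Pb := fun n (kn : (k <= n)%nat) => @Aux.real_bounds n k (m_of Delta n) k1 kn.
split.
- intro hD.
  have LP : 0 < L.
    unfold L. have : Delta * ln q > (- ln 2 / ln q) * ln q.
      nra.
    replace (- ln 2 / ln q * ln q) with (- ln 2) by (field; lra). lra.
  have eL : 1 < exp L by rewrite -exp_0; apply: exp_increasing.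
  intros eps epos.
  have x1 : Rabs (/ exp L) < 1.
    rewrite Rabs_right; last by left; apply: Rinv_0_lt_compat; lra.
    rewrite -Rinv_1; apply: Rinv_lt_contravar; lra.
  destruct (pow_lt_1_zero _ x1 eps epos) as [N0 HN].
  exists (Nat.max N0 k). intros n hn.
  have kn : (k <= n)%nat by lia.
  destruct (Pb n kn) as [_ [lo [_ hi]]].
  destruct (lnbound n kn) as [b1 _].
  have := HN n ltac:(lia).
  rewrite e_exp // in lo.
  set E := exp (INR n * ln 2 + INR (m_of Delta n) * ln q) in lo.
  have EL : exp L ^ n <= E by rewrite -exp_pow'; apply: exp_le.
  have Ep : 0 < exp L ^ n by apply: pow_lt; lra.
  rewrite -Rinv_pow; last lra.
  rewrite Rabs_right; last by left; apply: Rinv_0_lt_compat.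
  intro hx. unfold R_dist. rewrite Rabs_left1; last lra.
  have : 1 - E / (1 + E) < / exp L ^ n; last lra.
  replace (1 - E / (1 + E)) with (/ (1 + E)) by (field; lra).
  apply: Rinv_lt_contravar; nra.
- intro hD.
  have LN : L < 0.
    unfold L. have : Delta * ln q < (- ln 2 / ln q) * ln q.
      nra.
    replace (- ln 2 / ln q * ln q) with (- ln 2) by (field; lra). lra.
  have eL : exp L < 1 by rewrite -exp_0; apply: exp_increasing.
  have eL0 : 0 < exp L by apply: exp_pos.
  intros eps epos.
  have x1 : Rabs (exp L) < 1 by rewrite Rabs_right; lra.
  destruct (pow_lt_1_zero _ x1 (eps * q) ltac:(nra)) as [N0 HN].
  exists (Nat.max N0 k). intros n hn.
  have kn : (k <= n)%nat by lia.
  destruct (Pb n kn) as [up [_ [lo _]]].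
  destruct (lnbound n kn) as [_ b2].
  have := HN n ltac:(lia).
  rewrite e_exp // in up.
  set E := exp (INR n * ln 2 + INR (m_of Delta n) * ln q) in up.
  have EL : E <= exp (INR n * L - ln q) by apply: exp_le.
  rewrite /Rminus exp_plus exp_pow' exp_Ropp exp_ln // in EL.
  have Ep : 0 < exp L ^ n by apply: pow_lt; lra.
  rewrite Rabs_right; last by left.
  intro hx. unfold R_dist. rewrite Rminus_0_r Rabs_right; last lra.
  have : exp L ^ n * / q < eps; last lra.
  apply: (Rmult_lt_reg_r q) => //. rewrite Rmult_assoc Rinv_l; lra.
Qed.
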